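(* Let $u\in S$. Then there exist $(\varepsilon_i)_{i\ge4}$ and $(\varepsilon'_i)_{i\ge4}$ in $\mathcal{D}^\infty$ such that $\sum_{i=4}^\infty\varepsilon_i\alpha^i=u+\sum_{i=4}^\infty\varepsilon'_i\alpha^i$.
   Context: Let $P(x)=x^4-x^3-x^2-x-1$. Its roots are $\beta=\beta_1\approx 1.9275$, a real root $\beta_2\approx-0.7748$, and a pair of complex conjugate roots $\beta_3\approx-0.0763+0.8147i$ and $\overline{\beta_3}$. For $i\in\mathbb{Z}$ put $\alpha^i=(\beta_2^i,\beta_3^i)\in\mathbb{R}\times\mathbb{C}$, with $\alpha^0=1=(1,1)$; arithmetic is componentwise and an integer $n$ is identified with $(n,n)$. $\mathcal{D}^\infty$ is the set of sequences $(\varepsilon_i)_{i\ge l}$, $l\in\mathbb{Z}$, with $\varepsilon_i\in\{0,1\}$ and containing no four consecutive $1$'s. $S$ is the set $\{\pm\sum_{i=0}^3c_i\alpha^i : c_i\in\{0,1\},\ c_0c_1c_2c_3\neq1111\}\cup\{\pm(\alpha^{-1}+1+\alpha^2),\pm(\alpha^{-2}+\alpha^{-1}+\alpha),\pm(\alpha^{-3}+\alpha^{-2}+1+\alpha^3)\}$. *)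

(* Defs.v *)
From Stdlib Require Import Reals ZArith.
From Coquelicot Require Import Coquelicot.
Open Scope R_scope.

Definition P_R (x : R) : R := x^4 - x^3 - x^2 - x - 1.
Definition P_C (z : C) : C :=
  Cminus (Cminus (Cminus (Cminus (Cpow z 4) (Cpow z 3)) (Cpow z 2)) z) (RtoC 1).

Definition CpowZ (z : C) (k : Z) : C :=
  match k with
  | Z0 => RtoC 1
  | Zpos p => Cpow z (Pos.to_nat p)
  | Zneg p => Cinv (Cpow z (Pos.to_nat p))
  end.

(* alpha^k = (beta2^k, beta3^k) in R x C; arithmetic componentwise. *)
Definition RC := (R * C)%type.
Definition alpha (b2 : R) (b3 : C) (k : Z) : RC := (powerRZ b2 k, CpowZ b3 k).
Definition RCadd (u v : RC) : RC := (fst u + fst v, Cplus (snd u) (snd v)).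
Definition RCopp (u : RC) : RC := (- fst u, Copp (snd u)).
Definition RCzero : RC := (0, RtoC 0).
Definition RCone : RC := (1, RtoC 1).
Definition b2R (b : bool) : R := if b then 1 else 0.
Definition RCscal (b : bool) (u : RC) : RC := if b then u else RCzero.

Definition inS (b2 : R) (b3 : C) (u : RC) : Prop :=
  (exists (c0 c1 c2 c3 : bool) (neg : bool),
      ~ (c0 = true /\ c1 = true /\ c2 = true /\ c3 = true) /\
      let v := RCadd (RCscal c0 (alpha b2 b3 0))
               (RCadd (RCscal c1 (alpha b2 b3 1))
               (RCadd (RCscal c2 (alpha b2 b3 2)) (RCscal c3 (alpha b2 b3 3)))) in
      u = (if neg then RCopp v else v))
  \/ (let v := RCadd (alpha b2 b3 (-1)) (RCadd RCone (alpha b2 b3 2)) in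
      u = v \/ u = RCopp v)
  \/ (let v := RCadd (alpha b2 b3 (-2)) (RCadd (alpha b2 b3 (-1)) (alpha b2 b3 1)) in
      u = v \/ u = RCopp v)
  \/ (let v := RCadd (alpha b2 b3 (-3)) (RCadd (alpha b2 b3 (-2))
               (RCadd RCone (alpha b2 b3 3))) in
      u = v \/ u = RCopp v).

(* A sequence (eps_i)_{i >= 4} of 0/1 digits (given as eps : nat -> bool,
   values at i < 4 ignored) lies in D^infty: no four consecutive 1's. *)
Definition in_Dinf4 (eps : nat -> bool) : Prop :=
  forall i : nat, (4 <= i)%nat ->
    ~ (eps i = true /\ eps (i+1)%nat = true /\ eps (i+2)%nat = true /\ eps (i+3)%nat = true).

Definition tail_sum (b2 : R) (b3 : C) (eps : nat -> bool) (L : RC) : Prop :=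
  is_series (fun n : nat => b2R (eps (n+4)%nat) * b2 ^ (n+4)) (fst L) /\
  @is_series R_AbsRing C_R_NormedModule
    (fun n : nat => Cmult (RtoC (b2R (eps (n+4)%nat))) (Cpow b3 (n+4))) (snd L).

(* Main.v *)
Require Import Defs.
From Stdlib Require Import Reals ZArith.
From Coquelicot Require Import Coquelicot.
From Stdlib Require Import Lra Lia Psatz List.
Import ListNotations.
Open Scope R_scope.


Definition sq (l : list bool) (n : nat) : bool :=
  nth (if Nat.ltb n 4 then n else 4 + (n - 4) mod 4)%nat l false.

Lemma sq_per l k : sq l (8 + k) = sq l (4 + k).
Proof.
  unfold sq. replace (Nat.ltb (8+k) 4) with false by (symmetry; apply Nat.ltb_ge; lia).
  replace (Nat.ltb (4+k) 4) with false by (symmetry; apply Nat.ltb_ge; lia).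
  f_equal. replace (8 + k - 4)%nat with (k + 1 * 4)%nat by lia.
  replace (4 + k - 4)%nat with k by lia.
  rewrite Nat.Div0.mod_add. reflexivity.
Qed.

Definition red (m : nat) : nat := if Nat.ltb m 4 then m else (4 + (m - 4) mod 4)%nat.

Lemma red_lt m : (red m < 8)%nat.
Proof. unfold red. destruct (Nat.ltb_spec m 4). lia.
  pose proof (Nat.mod_upper_bound (m-4) 4). lia. Qed.

Lemma sq_red l m j : sq l (m + j) = sq l (red m + j).
Proof.
  unfold sq, red. destruct (Nat.ltb_spec m 4). reflexivity.
  replace (Nat.ltb (m+j) 4) with false by (symmetry; apply Nat.ltb_ge; lia).
  replace (Nat.ltb (4 + (m - 4) mod 4 + j) 4) with false by (symmetry; apply Nat.ltb_ge; lia).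
  f_equal. f_equal.
  replace (4 + (m - 4) mod 4 + j - 4)%nat with ((m - 4) mod 4 + j)%nat by lia.
  replace (m + j - 4)%nat with ((m - 4) + j)%nat by lia.
  rewrite Nat.Div0.add_mod_idemp_l. reflexivity.
Qed.

Definition win (l : list bool) (m : nat) : bool :=
  sq l m && sq l (m+1) && sq l (m+2) && sq l (m+3).

Definition good (l : list bool) : bool :=
  negb (win l 0 || win l 1 || win l 2 || win l 3 || win l 4 || win l 5 || win l 6 || win l 7).

Lemma good_ok l : good l = true -> forall m, win l m = false.
Proof.
  intros H m. unfold win. rewrite <- (Nat.add_0_r m) at 1.
  rewrite !(sq_red l m).
  pose proof (red_lt m). rewrite Nat.add_0_r.
  destruct (red m) as [|[|[|[|[|[|[|[|]]]]]]]]; try lia;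
  unfold good, win in H; simpl in H; simpl;
  destruct (sq l 0), (sq l 1), (sq l 2), (sq l 3), (sq l 4), (sq l 5), (sq l 6), (sq l 7), (sq l 8), (sq l 9), (sq l 10);
  simpl in *; congruence.
Qed.

Definition epsf (l : list bool) (k : nat) : bool := sq l (k - 4).

Lemma good_D l : good l = true -> in_Dinf4 (epsf l).
Proof.
  intros H i Hi [H0 [H1 [H2 H3]]].
  pose proof (good_ok l H (i-4)) as W. unfold win, epsf in *.
  replace (i + 1 - 4)%nat with (i - 4 + 1)%nat in H1 by lia.
  replace (i + 2 - 4)%nat with (i - 4 + 2)%nat in H2 by lia.
  replace (i + 3 - 4)%nat with (i - 4 + 3)%nat in H3 by lia.
  rewrite H0, H1, H2, H3 in W. discriminate.
Qed.


Lemma periodic_series {K : AbsRing} {V : NormedModule K} (t : nat -> V) (c : K) l :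
  is_series t l -> (forall k, t (8+k)%nat = scal c (t (4+k)%nat)) ->
  plus l (opp (sum_n t 7)) = scal c (plus l (opp (sum_n t 3))).
Proof.
  intros Hs Hp.
  assert (H8 : is_series (fun k => t (8+k)%nat) (plus l (opp (sum_n t 7)))).
  { apply is_series_incr_n. lia. simpl.
    replace (plus (plus l (opp (sum_n t 7))) (sum_n t 7)) with l; [exact Hs|].
    rewrite <- plus_assoc, (plus_opp_l (G:=V)), plus_zero_r; reflexivity. }
  assert (H4 : is_series (fun k => t (4+k)%nat) (plus l (opp (sum_n t 3)))).
  { apply is_series_incr_n. lia. simpl.
    replace (plus (plus l (opp (sum_n t 3))) (sum_n t 3)) with l; [exact Hs|].
    rewrite <- plus_assoc, (plus_opp_l (G:=V)), plus_zero_r; reflexivity. }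
  apply (is_series_scal c) in H4.
  assert (H8' : is_series (fun k => t (8+k)%nat) (scal c (plus l (opp (sum_n t 3))))).
  { eapply is_series_ext; [ | exact H4]. intros n. symmetry. apply Hp. }
  refine (filterlim_locally_unique _ _ _ H8 H8').
Qed.


Definition tR (l : list bool) (z : R) (n : nat) : R := b2R (sq l n) * z ^ (n + 4).
Definition closR l z := (sum_n (tR l z) 7 - z^4 * sum_n (tR l z) 3) / (1 - z^4).

Lemma b2R_bnd b : 0 <= b2R b <= 1.
Proof. destruct b; simpl; lra. Qed.

Lemma pow4_lt1 (r : R) : 0 <= r < 1 -> r ^ 4 < 1.
Proof. intros H. assert (r^2 < 1).
  { simpl. rewrite Rmult_1_r. apply Rle_lt_trans with (r*1). apply Rmult_le_compat_l; lra. lra. }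
  replace (r^4) with (r^2*r^2) by ring. apply Rle_lt_trans with (r^2 * 1).
  apply Rmult_le_compat_l. apply pow_le; lra. lra. lra. Qed.
Lemma bnd_aux a b c : 0 <= a -> 0 <= b <= 1 -> 0 <= c <= 1 -> c * (a * b) <= a.
Proof. intros. apply Rle_trans with (1 * (a * 1)).
  apply Rmult_le_compat; try lra. apply Rmult_le_pos; lra.
  apply Rmult_le_compat_l; lra. lra. Qed.

Lemma solve_l0 (m s7 s3 z : R) : m - s7 = z^4*(m - s3) -> z^4<1 -> m = (s7 - z^4*s3)/(1-z^4).
Proof. intros. field_simplify_eq; lra. Qed.

Lemma tail_R l z : Rabs z < 1 -> is_series (tR l z) (closR l z).
Proof.
  intros Hz.
  assert (Hex : ex_series (tR l z)).
  { apply (@ex_series_le R_AbsRing R_CompleteNormedModule _ (fun n => Rabs z ^ n)).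
    - intros n. change (norm (tR l z n)) with (Rabs (tR l z n)). unfold tR.
      rewrite Rabs_mult, <- RPow_abs, pow_add.
      pose proof (b2R_bnd (sq l n)). rewrite (Rabs_pos_eq (b2R _)) by lra.
      pose proof (Rabs_pos z). apply bnd_aux; auto. apply pow_le; lra.
      split. apply pow_le; lra. left; apply pow4_lt1; lra.
    - apply ex_series_geom. rewrite Rabs_Rabsolu. exact Hz. }
  destruct Hex as [l0 Hl0].
  assert (Hp : forall k, tR l z (8+k)%nat = scal (z^4) (tR l z (4+k)%nat)).
  { intros k. unfold tR. rewrite sq_per. change (scal (z^4) ?x) with (z^4 * x).
    replace (8 + k + 4)%nat with (4 + (4 + k + 4))%nat by lia. rewrite pow_add. ring. }
  pose proof (periodic_series (K:=R_AbsRing) (V:=R_NormedModule) _ (z^4) _ Hl0 Hp) as E.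
  change (l0 - sum_n (tR l z) 7 = z^4 * (l0 - sum_n (tR l z) 3)) in E.
  assert (H4 : z^4 < 1).
  { replace (z^4) with (Rabs z ^ 4). apply pow4_lt1. pose proof (Rabs_pos z); lra.
    rewrite RPow_abs. apply Rabs_pos_eq. replace (z^4) with ((z^2)^2) by ring. apply pow2_ge_0. }
  replace (closR l z) with l0; auto. unfold closR. apply solve_l0; auto.
Qed.


Definition tC (l : list bool) (z : C) (n : nat) : C := Cmult (RtoC (b2R (sq l n))) (Cpow z (n + 4)).
Definition closC l z : C :=
  Cdiv (Cminus (sum_n (tC l z) 7) (Cmult (Cpow z 4) (sum_n (tC l z) 3))) (Cminus (RtoC 1) (Cpow z 4)).

Lemma Cpow_add' z m n : Cpow z (m + n) = Cmult (Cpow z m) (Cpow z n).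
Proof. induction m; simpl. ring. rewrite IHm. ring. Qed.

Lemma solve_l0C (m s7 s3 z4 : C) : Cminus m s7 = Cmult z4 (Cminus m s3) -> Cminus (RtoC 1) z4 <> RtoC 0 ->
  m = Cdiv (Cminus s7 (Cmult z4 s3)) (Cminus (RtoC 1) z4).
Proof. intros H Hn. field_simplify_eq; auto.
  assert (H0 : Cplus (Cminus m s7) (Copp (Cmult z4 (Cminus m s3))) = RtoC 0) by (rewrite H; ring).
  transitivity (Cplus (Cminus s7 (Cmult z4 s3)) (Cplus (Cminus m s7) (Copp (Cmult z4 (Cminus m s3))))).
  ring. rewrite H0. ring. Qed.

Lemma tail_C l z : Cmod z < 1 -> @is_series R_AbsRing C_R_NormedModule (tC l z) (closC l z).
Proof.
  intros Hz.
  assert (Hex : @ex_series C_AbsRing C_NormedModule (tC l z)).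
  { apply (@ex_series_le C_AbsRing C_CompleteNormedModule _ (fun n => Cmod z ^ n)).
    - intros n. change (norm (tC l z n)) with (Cmod (tC l z n)). unfold tC.
      rewrite Cmod_mult, Cmod_pow, pow_add, Cmod_R.
      pose proof (b2R_bnd (sq l n)). rewrite (Rabs_pos_eq (b2R _)) by lra.
      pose proof (Cmod_ge_0 z). apply bnd_aux; auto. apply pow_le; lra.
      split. apply pow_le; lra. left; apply pow4_lt1; lra.
    - apply ex_series_geom. rewrite Rabs_pos_eq by apply Cmod_ge_0. exact Hz. }
  destruct Hex as [l0 Hl0].
  assert (Hp : forall k, tC l z (8+k)%nat = @scal C_AbsRing C_NormedModule (Cpow z 4) (tC l z (4+k)%nat)).
  { intros k. unfold tC. rewrite sq_per. change (@scal C_AbsRing C_NormedModule (Cpow z 4) ?x) with (Cmult (Cpow z 4) x).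
    replace (8 + k + 4)%nat with (4 + (4 + k + 4))%nat by lia. rewrite Cpow_add'. ring. }
  pose proof (periodic_series (K:=C_AbsRing) (V:=C_NormedModule) _ (Cpow z 4) _ Hl0 Hp) as E.
  assert (H4 : Cminus (RtoC 1) (Cpow z 4) <> RtoC 0).
  { intros H. assert (Cpow z 4 = RtoC 1) by (replace (Cpow z 4) with (Cminus (RtoC 1) (Cminus (RtoC 1) (Cpow z 4))) by ring; rewrite H; ring).
    assert (Cmod (Cpow z 4) = 1) by (rewrite H0; apply Cmod_1).
    rewrite Cmod_pow in H1. pose proof (pow4_lt1 (Cmod z) (conj (Cmod_ge_0 z) Hz)). lra. }
  replace (closC l z) with l0; [exact Hl0|]. unfold closC. apply solve_l0C; auto.
Qed.


Lemma b2_bnd b2 : P_R b2 = 0 -> b2 < 0 -> Rabs b2 < 1.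
Proof. unfold P_R. intros H Hn. rewrite Rabs_left by lra.
  destruct (Rlt_or_le (-1) b2). lra. exfalso.
  assert (b2^4 - b2^2 >= 0). { replace (b2^4-b2^2) with (b2^2*(b2^2-1)) by ring.
    apply Rle_ge, Rmult_le_pos. nra. nra. }
  assert (- b2^3 - b2 - 1 >= 1) by nra. lra. Qed.

Lemma b3_eqs a b : P_C (a,b) = RtoC 0 ->
  a^4 - 6*a^2*b^2 + b^4 - (a^3 - 3*a*b^2) - (a^2-b^2) - a - 1 = 0 /\
  4*a^3*b - 4*a*b^3 - (3*a^2*b - b^3) - 2*a*b - b = 0.
Proof. intros H. unfold P_C in H. simpl in H. unfold Cminus, Cplus, Cmult, Copp, RtoC in H. simpl in H.
  injection H. intros H1 H2. split; [rewrite <- H2 | rewrite <- H1]; ring. Qed.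

Lemma sr_bound s r : r > 0 ->
  r^2 - r*s^2 + s*r + r - 1 = 0 -> s^3 - 2*s*r - s^2 + r - s - 1 = 0 -> r < 1.
Proof. intros Hr H0 H1.
  assert (K : s*(r^2+1) = r^2 - r).
  { assert (-(s*(r^2 - r*s^2 + s*r + r - 1) + r*(s^3 - 2*s*r - s^2 + r - s - 1)) = s*(r^2+1) - (r^2 - r)) by ring.
    rewrite H0, H1 in H. lra. }
  destruct (Rlt_or_le r 1) as [|Hr1]; auto. exfalso.
  assert (Hs0 : 0 <= s). { assert (0 <= r^2 - r) by nra. assert (0 < r^2+1) by nra. nra. }
  assert (Hs1 : s < 1). { assert (r^2 - r < r^2 + 1) by lra. assert (0 < r^2+1) by nra. nra. }
  assert (s^2 - s - 1 < 0) by nra.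
  assert (r*(s^2-s-1) = r^2 - 1).
  { assert (r*(s^2-s-1) = r^2 - 1 - (r^2 - r*s^2 + s*r + r - 1)) by ring. lra. }
  assert (r*(s^2-s-1) < 0) by (apply Rmult_pos_neg; lra).
  nra.
Qed.

Lemma b3_bnd b3 : P_C b3 = RtoC 0 -> 0 < Im b3 -> Cmod b3 < 1.
Proof. destruct b3 as [a b]. simpl. intros H Hb. destruct (b3_eqs a b H) as [E1 E2].
  set (s := 2*a). set (r := a^2+b^2).
  assert (R1 : s^3 - 2*s*r - s^2 + r - s - 1 = 0).
  { assert (b * (s^3 - 2*s*r - s^2 + r - s - 1) = 0).
    { unfold s, r. rewrite <- E2. ring. }
    destruct (Rmult_integral _ _ H0). lra. auto. }
  assert (R0 : r^2 - r*s^2 + s*r + r - 1 = 0).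
  { assert (r^2 - r*s^2 + s*r + r - 1 = (a^4 - 6*a^2*b^2 + b^4 - (a^3 - 3*a*b^2) - (a^2-b^2) - a - 1) - a * (s^3 - 2*s*r - s^2 + r - s - 1)).
    { unfold s, r. ring. }
    rewrite H0, E1, R1. ring. }
  assert (r < 1). { apply (sr_bound s r); auto. unfold r. assert (0 < b^2) by (simpl; nra). assert (0 <= a^2) by (simpl; nra). apply Rplus_le_lt_0_compat; assumption. }
  unfold Cmod. cbn [fst snd]. apply Rlt_le_trans with (sqrt 1); [apply sqrt_lt_1_alt | rewrite sqrt_1; lra]. fold r. split; [apply Rplus_le_le_0_compat; simpl; nra | exact H0].
Qed.


Definition Concl (b2 : R) (b3 : C) (u : RC) : Prop :=
  exists (eps eps' : nat -> bool) (L L' : RC),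
    in_Dinf4 eps /\ in_Dinf4 eps' /\
    tail_sum b2 b3 eps L /\ tail_sum b2 b3 eps' L' /\
    L = RCadd u L'.

Lemma tail_ok b2 b3 l : Rabs b2 < 1 -> Cmod b3 < 1 -> tail_sum b2 b3 (epsf l) (closR l b2, closC l b3).
Proof. intros H2 H3. split; simpl.
  - eapply is_series_ext; [| apply (tail_R l b2 H2)]. intros n. unfold tR, epsf.
    rewrite Nat.add_sub. reflexivity.
  - eapply is_series_ext; [| apply (tail_C l b3 H3)]. intros n. unfold tC, epsf.
    rewrite Nat.add_sub. reflexivity.
Qed.

Lemma case_ok b2 b3 l l' u : Rabs b2 < 1 -> Cmod b3 < 1 -> good l = true -> good l' = true ->
  fst u = closR l b2 - closR l' b2 -> snd u = Cminus (closC l b3) (closC l' b3) -> Concl b2 b3 u.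
Proof. intros H2 H3 G1 G2 E1 E2.
  exists (epsf l), (epsf l'), (closR l b2, closC l b3), (closR l' b2, closC l' b3).
  split; [apply good_D; auto|]. split; [apply good_D; auto|].
  split; [apply tail_ok; auto|]. split; [apply tail_ok; auto|].
  destruct u as [u1 u2]. simpl in *. unfold RCadd. simpl. f_equal.
  rewrite E1. ring. rewrite E2. ring.
Qed.

Lemma swap b2 b3 u : Concl b2 b3 u -> Concl b2 b3 (RCopp u).
Proof. intros [e [e' [L [L' [H1 [H2 [H3 [H4 H5]]]]]]]].
  exists e', e, L', L. split; [auto|]. split; [auto|]. split; [auto|]. split; [auto|].
  subst L. destruct u as [u1 u2]; destruct L' as [l1 l2]. unfold RCadd, RCopp. simpl. f_equal. ring. ring.
Qed.

Lemma sum7R (t : nat -> R) : sum_n t 7 = t 0%nat + t 1%nat + t 2%nat + t 3%nat + t 4%nat + t 5%nat + t 6%nat + t 7%nat.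
Proof. rewrite !sum_Sn, sum_O. reflexivity. Qed.
Lemma sum3R (t : nat -> R) : sum_n t 3 = t 0%nat + t 1%nat + t 2%nat + t 3%nat.
Proof. rewrite !sum_Sn, sum_O. reflexivity. Qed.
Lemma sum7C (t : nat -> C) : sum_n t 7 = Cplus (Cplus (Cplus (Cplus (Cplus (Cplus (Cplus (t 0%nat) (t 1%nat)) (t 2%nat)) (t 3%nat)) (t 4%nat)) (t 5%nat)) (t 6%nat)) (t 7%nat).
Proof. rewrite !sum_Sn, sum_O. reflexivity. Qed.
Lemma sum3C (t : nat -> C) : sum_n t 3 = Cplus (Cplus (Cplus (t 0%nat) (t 1%nat)) (t 2%nat)) (t 3%nat).
Proof. rewrite !sum_Sn, sum_O. reflexivity. Qed.

Lemma finR z U A B Q : P_R z = 0 -> 1 - z^4 <> 0 -> z <> 0 ->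
  z^3 * (U*(1-z^4) - (A - B)) = Q * P_R z -> U = A/(1-z^4) - B/(1-z^4).
Proof. intros HP H4 Hz E. rewrite HP, Rmult_0_r in E.
  apply Rmult_integral in E. destruct E as [E|E].
  exfalso. apply (pow_nonzero z 3 Hz E). field_simplify_eq; auto. lra. Qed.

Lemma finC z U A B Q : P_C z = RtoC 0 -> Cminus (RtoC 1) (Cpow z 4) <> RtoC 0 -> z <> RtoC 0 ->
  Cmult (Cpow z 3) (Cminus (Cmult U (Cminus (RtoC 1) (Cpow z 4))) (Cminus A B)) = Cmult Q (P_C z) ->
  U = Cminus (Cdiv A (Cminus (RtoC 1) (Cpow z 4))) (Cdiv B (Cminus (RtoC 1) (Cpow z 4))).
Proof. intros HP H4 Hz E. rewrite HP, Cmult_0_r in E.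
  set (X := Cminus (Cmult U (Cminus (RtoC 1) (Cpow z 4))) (Cminus A B)) in *.
  assert (E' : X = RtoC 0).
  { transitivity (Cmult (Cinv (Cpow z 3)) (Cmult (Cpow z 3) X)).
    field; first [apply Cpow_nz; auto | auto]. rewrite E. ring. }
  unfold X in E'. field_simplify_eq; auto.
  transitivity (Cplus (Cminus A B) (Cminus (Cmult U (Cminus (RtoC 1) (Cpow z 4))) (Cminus A B))). ring.
  rewrite E'. ring.
Qed.

Lemma caseA_0000 b2 b3 (hb2 : P_R b2 = 0) (hb3 : P_C b3 = RtoC 0) (H2 : Rabs b2 < 1) (H3 : Cmod b3 < 1)
  (z2 : b2 <> 0) (z3 : b3 <> RtoC 0) (n2 : 1 - b2^4 <> 0) (n3 : Cminus (RtoC 1) (Cpow b3 4) <> RtoC 0) :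
  Concl b2 b3 (RCadd (RCscal false (alpha b2 b3 0)) (RCadd (RCscal false (alpha b2 b3 1)) (RCadd (RCscal false (alpha b2 b3 2)) (RCscal false (alpha b2 b3 3))))).
Proof.
  apply (case_ok b2 b3 [false;false;false;false;false;false;false;false] [false;false;false;false;false;false;false;false]); auto.
  - cbn [fst RCadd alpha RCone RCscal RCzero]. unfold closR.
    apply (finR _ _ _ _ 0); auto.
    rewrite !sum7R, !sum3R. unfold tR, sq. simpl. unfold P_R. field; auto.
  - cbn [snd RCadd alpha RCone RCscal RCzero]. unfold closC.
    apply (finC _ _ _ _ (RtoC 0)); auto.
    rewrite !sum7C, !sum3C. unfold tC, sq. simpl. unfold P_C. field; auto.
Qed.

Lemma caseA_0001 b2 b3 (hb2 : P_R b2 = 0) (hb3 : P_C b3 = RtoC 0) (H2 : Rabs b2 < 1) (H3 : Cmod b3 < 1)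
  (z2 : b2 <> 0) (z3 : b3 <> RtoC 0) (n2 : 1 - b2^4 <> 0) (n3 : Cminus (RtoC 1) (Cpow b3 4) <> RtoC 0) :
  Concl b2 b3 (RCadd (RCscal false (alpha b2 b3 0)) (RCadd (RCscal false (alpha b2 b3 1)) (RCadd (RCscal false (alpha b2 b3 2)) (RCscal true (alpha b2 b3 3))))).
Proof.
  apply (case_ok b2 b3 [false;false;false;false;false;false;false;false] [true;true;true;false;true;true;true;false]); auto.
  - cbn [fst RCadd alpha RCone RCscal RCzero]. unfold closR.
    apply (finR _ _ _ _ (- b2^6)); auto.
    rewrite !sum7R, !sum3R. unfold tR, sq. simpl. unfold P_R. field; auto.
  - cbn [snd RCadd alpha RCone RCscal RCzero]. unfold closC.
    apply (finC _ _ _ _ (Copp (Cpow b3 6))); auto.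
    rewrite !sum7C, !sum3C. unfold tC, sq. simpl. unfold P_C. field; auto.
Qed.

Lemma caseA_0010 b2 b3 (hb2 : P_R b2 = 0) (hb3 : P_C b3 = RtoC 0) (H2 : Rabs b2 < 1) (H3 : Cmod b3 < 1)
  (z2 : b2 <> 0) (z3 : b3 <> RtoC 0) (n2 : 1 - b2^4 <> 0) (n3 : Cminus (RtoC 1) (Cpow b3 4) <> RtoC 0) :
  Concl b2 b3 (RCadd (RCscal false (alpha b2 b3 0)) (RCadd (RCscal false (alpha b2 b3 1)) (RCadd (RCscal true (alpha b2 b3 2)) (RCscal false (alpha b2 b3 3))))).
Proof.
  apply (case_ok b2 b3 [false;false;true;false;false;false;true;false] [false;false;false;true;false;false;false;true]); auto.
  - cbn [fst RCadd alpha RCone RCscal RCzero]. unfold closR.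
    apply (finR _ _ _ _ (- b2^5 + b2^6)); auto.
    rewrite !sum7R, !sum3R. unfold tR, sq. simpl. unfold P_R. field; auto.
  - cbn [snd RCadd alpha RCone RCscal RCzero]. unfold closC.
    apply (finC _ _ _ _ (Cplus (Copp (Cpow b3 5)) (Cpow b3 6))); auto.
    rewrite !sum7C, !sum3C. unfold tC, sq. simpl. unfold P_C. field; auto.
Qed.

Lemma caseA_0011 b2 b3 (hb2 : P_R b2 = 0) (hb3 : P_C b3 = RtoC 0) (H2 : Rabs b2 < 1) (H3 : Cmod b3 < 1)
  (z2 : b2 <> 0) (z3 : b3 <> RtoC 0) (n2 : 1 - b2^4 <> 0) (n3 : Cminus (RtoC 1) (Cpow b3 4) <> RtoC 0) :
  Concl b2 b3 (RCadd (RCscal false (alpha b2 b3 0)) (RCadd (RCscal false (alpha b2 b3 1)) (RCadd (RCscal true (alpha b2 b3 2)) (RCscal true (alpha b2 b3 3))))).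
Proof.
  apply (case_ok b2 b3 [false;false;true;false;false;false;false;false] [true;true;false;false;false;false;false;false]); auto.
  - cbn [fst RCadd alpha RCone RCscal RCzero]. unfold closR.
    apply (finR _ _ _ _ (- b2^5 + b2^9)); auto.
    rewrite !sum7R, !sum3R. unfold tR, sq. simpl. unfold P_R. field; auto.
  - cbn [snd RCadd alpha RCone RCscal RCzero]. unfold closC.
    apply (finC _ _ _ _ (Cplus (Copp (Cpow b3 5)) (Cpow b3 9))); auto.
    rewrite !sum7C, !sum3C. unfold tC, sq. simpl. unfold P_C. field; auto.
Qed.

Lemma caseA_0100 b2 b3 (hb2 : P_R b2 = 0) (hb3 : P_C b3 = RtoC 0) (H2 : Rabs b2 < 1) (H3 : Cmod b3 < 1)
  (z2 : b2 <> 0) (z3 : b3 <> RtoC 0) (n2 : 1 - b2^4 <> 0) (n3 : Cminus (RtoC 1) (Cpow b3 4) <> RtoC 0) :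
  Concl b2 b3 (RCadd (RCscal false (alpha b2 b3 0)) (RCadd (RCscal true (alpha b2 b3 1)) (RCadd (RCscal false (alpha b2 b3 2)) (RCscal false (alpha b2 b3 3))))).
Proof.
  apply (case_ok b2 b3 [false;true;false;false;false;true;false;false] [false;false;true;false;false;false;true;false]); auto.
  - cbn [fst RCadd alpha RCone RCscal RCzero]. unfold closR.
    apply (finR _ _ _ _ (- b2^4 + b2^5)); auto.
    rewrite !sum7R, !sum3R. unfold tR, sq. simpl. unfold P_R. field; auto.
  - cbn [snd RCadd alpha RCone RCscal RCzero]. unfold closC.
    apply (finC _ _ _ _ (Cplus (Copp (Cpow b3 4)) (Cpow b3 5))); auto.
    rewrite !sum7C, !sum3C. unfold tC, sq. simpl. unfold P_C. field; auto.
Qed.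

Lemma caseA_0101 b2 b3 (hb2 : P_R b2 = 0) (hb3 : P_C b3 = RtoC 0) (H2 : Rabs b2 < 1) (H3 : Cmod b3 < 1)
  (z2 : b2 <> 0) (z3 : b3 <> RtoC 0) (n2 : 1 - b2^4 <> 0) (n3 : Cminus (RtoC 1) (Cpow b3 4) <> RtoC 0) :
  Concl b2 b3 (RCadd (RCscal false (alpha b2 b3 0)) (RCadd (RCscal true (alpha b2 b3 1)) (RCadd (RCscal false (alpha b2 b3 2)) (RCscal true (alpha b2 b3 3))))).
Proof.
  apply (case_ok b2 b3 [false;true;false;true;false;true;false;true] [false;false;true;false;true;false;true;false]); auto.
  - cbn [fst RCadd alpha RCone RCscal RCzero]. unfold closR.
    apply (finR _ _ _ _ (- b2^4 + b2^5 - b2^6 + b2^7)); auto.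
    rewrite !sum7R, !sum3R. unfold tR, sq. simpl. unfold P_R. field; auto.
  - cbn [snd RCadd alpha RCone RCscal RCzero]. unfold closC.
    apply (finC _ _ _ _ (Cplus (Cplus (Cplus (Copp (Cpow b3 4)) (Cpow b3 5)) (Copp (Cpow b3 6))) (Cpow b3 7))); auto.
    rewrite !sum7C, !sum3C. unfold tC, sq. simpl. unfold P_C. field; auto.
Qed.

Lemma caseA_0110 b2 b3 (hb2 : P_R b2 = 0) (hb3 : P_C b3 = RtoC 0) (H2 : Rabs b2 < 1) (H3 : Cmod b3 < 1)
  (z2 : b2 <> 0) (z3 : b3 <> RtoC 0) (n2 : 1 - b2^4 <> 0) (n3 : Cminus (RtoC 1) (Cpow b3 4) <> RtoC 0) :
  Concl b2 b3 (RCadd (RCscal false (alpha b2 b3 0)) (RCadd (RCscal true (alpha b2 b3 1)) (RCadd (RCscal true (alpha b2 b3 2)) (RCscal false (alpha b2 b3 3))))).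
Proof.
  apply (case_ok b2 b3 [false;true;false;false;false;true;false;false] [false;false;false;true;false;false;false;true]); auto.
  - cbn [fst RCadd alpha RCone RCscal RCzero]. unfold closR.
    apply (finR _ _ _ _ (- b2^4 + b2^6)); auto.
    rewrite !sum7R, !sum3R. unfold tR, sq. simpl. unfold P_R. field; auto.
  - cbn [snd RCadd alpha RCone RCscal RCzero]. unfold closC.
    apply (finC _ _ _ _ (Cplus (Copp (Cpow b3 4)) (Cpow b3 6))); auto.
    rewrite !sum7C, !sum3C. unfold tC, sq. simpl. unfold P_C. field; auto.
Qed.

Lemma caseA_0111 b2 b3 (hb2 : P_R b2 = 0) (hb3 : P_C b3 = RtoC 0) (H2 : Rabs b2 < 1) (H3 : Cmod b3 < 1)
  (z2 : b2 <> 0) (z3 : b3 <> RtoC 0) (n2 : 1 - b2^4 <> 0) (n3 : Cminus (RtoC 1) (Cpow b3 4) <> RtoC 0) :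
  Concl b2 b3 (RCadd (RCscal false (alpha b2 b3 0)) (RCadd (RCscal true (alpha b2 b3 1)) (RCadd (RCscal true (alpha b2 b3 2)) (RCscal true (alpha b2 b3 3))))).
Proof.
  apply (case_ok b2 b3 [false;true;false;false;false;false;false;false] [true;false;false;false;false;false;false;false]); auto.
  - cbn [fst RCadd alpha RCone RCscal RCzero]. unfold closR.
    apply (finR _ _ _ _ (- b2^4 + b2^8)); auto.
    rewrite !sum7R, !sum3R. unfold tR, sq. simpl. unfold P_R. field; auto.
  - cbn [snd RCadd alpha RCone RCscal RCzero]. unfold closC.
    apply (finC _ _ _ _ (Cplus (Copp (Cpow b3 4)) (Cpow b3 8))); auto.
    rewrite !sum7C, !sum3C. unfold tC, sq. simpl. unfold P_C. field; auto.
Qed.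

Lemma caseA_1000 b2 b3 (hb2 : P_R b2 = 0) (hb3 : P_C b3 = RtoC 0) (H2 : Rabs b2 < 1) (H3 : Cmod b3 < 1)
  (z2 : b2 <> 0) (z3 : b3 <> RtoC 0) (n2 : 1 - b2^4 <> 0) (n3 : Cminus (RtoC 1) (Cpow b3 4) <> RtoC 0) :
  Concl b2 b3 (RCadd (RCscal true (alpha b2 b3 0)) (RCadd (RCscal false (alpha b2 b3 1)) (RCadd (RCscal false (alpha b2 b3 2)) (RCscal false (alpha b2 b3 3))))).
Proof.
  apply (case_ok b2 b3 [true;false;false;false;true;false;false;false] [false;true;false;false;false;true;false;false]); auto.
  - cbn [fst RCadd alpha RCone RCscal RCzero]. unfold closR.
    apply (finR _ _ _ _ (- b2^3 + b2^4)); auto.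
    rewrite !sum7R, !sum3R. unfold tR, sq. simpl. unfold P_R. field; auto.
  - cbn [snd RCadd alpha RCone RCscal RCzero]. unfold closC.
    apply (finC _ _ _ _ (Cplus (Copp (Cpow b3 3)) (Cpow b3 4))); auto.
    rewrite !sum7C, !sum3C. unfold tC, sq. simpl. unfold P_C. field; auto.
Qed.

Lemma caseA_1001 b2 b3 (hb2 : P_R b2 = 0) (hb3 : P_C b3 = RtoC 0) (H2 : Rabs b2 < 1) (H3 : Cmod b3 < 1)
  (z2 : b2 <> 0) (z3 : b3 <> RtoC 0) (n2 : 1 - b2^4 <> 0) (n3 : Cminus (RtoC 1) (Cpow b3 4) <> RtoC 0) :
  Concl b2 b3 (RCadd (RCscal true (alpha b2 b3 0)) (RCadd (RCscal false (alpha b2 b3 1)) (RCadd (RCscal false (alpha b2 b3 2)) (RCscal true (alpha b2 b3 3))))).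
Proof.
  apply (case_ok b2 b3 [true;false;false;true;false;false;false;true] [false;true;false;false;false;true;false;false]); auto.
  - cbn [fst RCadd alpha RCone RCscal RCzero]. unfold closR.
    apply (finR _ _ _ _ (- b2^3 + b2^4 - b2^6 + b2^7)); auto.
    rewrite !sum7R, !sum3R. unfold tR, sq. simpl. unfold P_R. field; auto.
  - cbn [snd RCadd alpha RCone RCscal RCzero]. unfold closC.
    apply (finC _ _ _ _ (Cplus (Cplus (Cplus (Copp (Cpow b3 3)) (Cpow b3 4)) (Copp (Cpow b3 6))) (Cpow b3 7))); auto.
    rewrite !sum7C, !sum3C. unfold tC, sq. simpl. unfold P_C. field; auto.
Qed.

Lemma caseA_1010 b2 b3 (hb2 : P_R b2 = 0) (hb3 : P_C b3 = RtoC 0) (H2 : Rabs b2 < 1) (H3 : Cmod b3 < 1)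
  (z2 : b2 <> 0) (z3 : b3 <> RtoC 0) (n2 : 1 - b2^4 <> 0) (n3 : Cminus (RtoC 1) (Cpow b3 4) <> RtoC 0) :
  Concl b2 b3 (RCadd (RCscal true (alpha b2 b3 0)) (RCadd (RCscal false (alpha b2 b3 1)) (RCadd (RCscal true (alpha b2 b3 2)) (RCscal false (alpha b2 b3 3))))).
Proof.
  apply (case_ok b2 b3 [true;false;true;false;true;false;true;false] [false;true;false;true;false;true;false;true]); auto.
  - cbn [fst RCadd alpha RCone RCscal RCzero]. unfold closR.
    apply (finR _ _ _ _ (- b2^3 + b2^4 - b2^5 + b2^6)); auto.
    rewrite !sum7R, !sum3R. unfold tR, sq. simpl. unfold P_R. field; auto.
  - cbn [snd RCadd alpha RCone RCscal RCzero]. unfold closC.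
    apply (finC _ _ _ _ (Cplus (Cplus (Cplus (Copp (Cpow b3 3)) (Cpow b3 4)) (Copp (Cpow b3 5))) (Cpow b3 6))); auto.
    rewrite !sum7C, !sum3C. unfold tC, sq. simpl. unfold P_C. field; auto.
Qed.

Lemma caseA_1011 b2 b3 (hb2 : P_R b2 = 0) (hb3 : P_C b3 = RtoC 0) (H2 : Rabs b2 < 1) (H3 : Cmod b3 < 1)
  (z2 : b2 <> 0) (z3 : b3 <> RtoC 0) (n2 : 1 - b2^4 <> 0) (n3 : Cminus (RtoC 1) (Cpow b3 4) <> RtoC 0) :
  Concl b2 b3 (RCadd (RCscal true (alpha b2 b3 0)) (RCadd (RCscal false (alpha b2 b3 1)) (RCadd (RCscal true (alpha b2 b3 2)) (RCscal true (alpha b2 b3 3))))).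
Proof.
  apply (case_ok b2 b3 [true;false;true;false;false;false;true;false] [false;true;false;false;false;true;false;false]); auto.
  - cbn [fst RCadd alpha RCone RCscal RCzero]. unfold closR.
    apply (finR _ _ _ _ (- b2^3 + b2^4 - b2^5 + b2^7)); auto.
    rewrite !sum7R, !sum3R. unfold tR, sq. simpl. unfold P_R. field; auto.
  - cbn [snd RCadd alpha RCone RCscal RCzero]. unfold closC.
    apply (finC _ _ _ _ (Cplus (Cplus (Cplus (Copp (Cpow b3 3)) (Cpow b3 4)) (Copp (Cpow b3 5))) (Cpow b3 7))); auto.
    rewrite !sum7C, !sum3C. unfold tC, sq. simpl. unfold P_C. field; auto.
Qed.

Lemma caseA_1100 b2 b3 (hb2 : P_R b2 = 0) (hb3 : P_C b3 = RtoC 0) (H2 : Rabs b2 < 1) (H3 : Cmod b3 < 1)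
  (z2 : b2 <> 0) (z3 : b3 <> RtoC 0) (n2 : 1 - b2^4 <> 0) (n3 : Cminus (RtoC 1) (Cpow b3 4) <> RtoC 0) :
  Concl b2 b3 (RCadd (RCscal true (alpha b2 b3 0)) (RCadd (RCscal true (alpha b2 b3 1)) (RCadd (RCscal false (alpha b2 b3 2)) (RCscal false (alpha b2 b3 3))))).
Proof.
  apply (case_ok b2 b3 [true;false;false;false;true;false;false;false] [false;false;true;false;false;false;true;false]); auto.
  - cbn [fst RCadd alpha RCone RCscal RCzero]. unfold closR.
    apply (finR _ _ _ _ (- b2^3 + b2^5)); auto.
    rewrite !sum7R, !sum3R. unfold tR, sq. simpl. unfold P_R. field; auto.
  - cbn [snd RCadd alpha RCone RCscal RCzero]. unfold closC.
    apply (finC _ _ _ _ (Cplus (Copp (Cpow b3 3)) (Cpow b3 5))); auto.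
    rewrite !sum7C, !sum3C. unfold tC, sq. simpl. unfold P_C. field; auto.
Qed.

Lemma caseA_1101 b2 b3 (hb2 : P_R b2 = 0) (hb3 : P_C b3 = RtoC 0) (H2 : Rabs b2 < 1) (H3 : Cmod b3 < 1)
  (z2 : b2 <> 0) (z3 : b3 <> RtoC 0) (n2 : 1 - b2^4 <> 0) (n3 : Cminus (RtoC 1) (Cpow b3 4) <> RtoC 0) :
  Concl b2 b3 (RCadd (RCscal true (alpha b2 b3 0)) (RCadd (RCscal true (alpha b2 b3 1)) (RCadd (RCscal false (alpha b2 b3 2)) (RCscal true (alpha b2 b3 3))))).
Proof.
  apply (case_ok b2 b3 [true;false;false;true;false;false;false;true] [false;false;true;false;false;false;true;false]); auto.
  - cbn [fst RCadd alpha RCone RCscal RCzero]. unfold closR.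
    apply (finR _ _ _ _ (- b2^3 + b2^5 - b2^6 + b2^7)); auto.
    rewrite !sum7R, !sum3R. unfold tR, sq. simpl. unfold P_R. field; auto.
  - cbn [snd RCadd alpha RCone RCscal RCzero]. unfold closC.
    apply (finC _ _ _ _ (Cplus (Cplus (Cplus (Copp (Cpow b3 3)) (Cpow b3 5)) (Copp (Cpow b3 6))) (Cpow b3 7))); auto.
    rewrite !sum7C, !sum3C. unfold tC, sq. simpl. unfold P_C. field; auto.
Qed.

Lemma caseA_1110 b2 b3 (hb2 : P_R b2 = 0) (hb3 : P_C b3 = RtoC 0) (H2 : Rabs b2 < 1) (H3 : Cmod b3 < 1)
  (z2 : b2 <> 0) (z3 : b3 <> RtoC 0) (n2 : 1 - b2^4 <> 0) (n3 : Cminus (RtoC 1) (Cpow b3 4) <> RtoC 0) :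
  Concl b2 b3 (RCadd (RCscal true (alpha b2 b3 0)) (RCadd (RCscal true (alpha b2 b3 1)) (RCadd (RCscal true (alpha b2 b3 2)) (RCscal false (alpha b2 b3 3))))).
Proof.
  apply (case_ok b2 b3 [true;false;false;false;true;false;false;false] [false;false;false;true;false;false;false;true]); auto.
  - cbn [fst RCadd alpha RCone RCscal RCzero]. unfold closR.
    apply (finR _ _ _ _ (- b2^3 + b2^6)); auto.
    rewrite !sum7R, !sum3R. unfold tR, sq. simpl. unfold P_R. field; auto.
  - cbn [snd RCadd alpha RCone RCscal RCzero]. unfold closC.
    apply (finC _ _ _ _ (Cplus (Copp (Cpow b3 3)) (Cpow b3 6))); auto.
    rewrite !sum7C, !sum3C. unfold tC, sq. simpl. unfold P_C. field; auto.
Qed.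

Lemma caseB b2 b3 (hb2 : P_R b2 = 0) (hb3 : P_C b3 = RtoC 0) (H2 : Rabs b2 < 1) (H3 : Cmod b3 < 1)
  (z2 : b2 <> 0) (z3 : b3 <> RtoC 0) (n2 : 1 - b2^4 <> 0) (n3 : Cminus (RtoC 1) (Cpow b3 4) <> RtoC 0) :
  Concl b2 b3 (RCadd (alpha b2 b3 (-1)) (RCadd RCone (alpha b2 b3 2))).
Proof.
  apply (case_ok b2 b3 [true;false;true;true;false;false;true;true] [true;true;false;false;true;true;false;false]); auto.
  - cbn [fst RCadd alpha RCone RCscal RCzero]. unfold closR.
    apply (finR _ _ _ _ (- b2^2 + b2^4 - b2^5 + b2^7)); auto.
    rewrite !sum7R, !sum3R. unfold tR, sq. simpl. unfold P_R. field; auto.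
  - cbn [snd RCadd alpha RCone RCscal RCzero]. unfold closC.
    apply (finC _ _ _ _ (Cplus (Cplus (Cplus (Copp (Cpow b3 2)) (Cpow b3 4)) (Copp (Cpow b3 5))) (Cpow b3 7))); auto.
    rewrite !sum7C, !sum3C. unfold tC, sq. simpl. unfold P_C. field; auto.
Qed.

Lemma caseC b2 b3 (hb2 : P_R b2 = 0) (hb3 : P_C b3 = RtoC 0) (H2 : Rabs b2 < 1) (H3 : Cmod b3 < 1)
  (z2 : b2 <> 0) (z3 : b3 <> RtoC 0) (n2 : 1 - b2^4 <> 0) (n3 : Cminus (RtoC 1) (Cpow b3 4) <> RtoC 0) :
  Concl b2 b3 (RCadd (alpha b2 b3 (-2)) (RCadd (alpha b2 b3 (-1)) (alpha b2 b3 1))).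
Proof.
  apply (case_ok b2 b3 [false;true;true;false;false;true;true;false] [true;false;false;true;true;false;false;true]); auto.
  - cbn [fst RCadd alpha RCone RCscal RCzero]. unfold closR.
    apply (finR _ _ _ _ (- b2^1 + b2^3 - b2^4 + b2^6)); auto.
    rewrite !sum7R, !sum3R. unfold tR, sq. simpl. unfold P_R. field; auto.
  - cbn [snd RCadd alpha RCone RCscal RCzero]. unfold closC.
    apply (finC _ _ _ _ (Cplus (Cplus (Cplus (Copp (Cpow b3 1)) (Cpow b3 3)) (Copp (Cpow b3 4))) (Cpow b3 6))); auto.
    rewrite !sum7C, !sum3C. unfold tC, sq. simpl. unfold P_C. field; auto.
Qed.

Lemma caseD b2 b3 (hb2 : P_R b2 = 0) (hb3 : P_C b3 = RtoC 0) (H2 : Rabs b2 < 1) (H3 : Cmod b3 < 1)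
  (z2 : b2 <> 0) (z3 : b3 <> RtoC 0) (n2 : 1 - b2^4 <> 0) (n3 : Cminus (RtoC 1) (Cpow b3 4) <> RtoC 0) :
  Concl b2 b3 (RCadd (alpha b2 b3 (-3)) (RCadd (alpha b2 b3 (-2)) (RCadd RCone (alpha b2 b3 3)))).
Proof.
  apply (case_ok b2 b3 [true;true;false;false;true;true;false;false] [false;false;true;true;false;false;true;true]); auto.
  - cbn [fst RCadd alpha RCone RCscal RCzero]. unfold closR.
    apply (finR _ _ _ _ (- b2^0 + b2^2 - b2^3 + b2^5)); auto.
    rewrite !sum7R, !sum3R. unfold tR, sq. simpl. unfold P_R. field; auto.
  - cbn [snd RCadd alpha RCone RCscal RCzero]. unfold closC.
    apply (finC _ _ _ _ (Cplus (Cplus (Cplus (Copp (Cpow b3 0)) (Cpow b3 2)) (Copp (Cpow b3 3))) (Cpow b3 5))); auto.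
    rewrite !sum7C, !sum3C. unfold tC, sq. simpl. unfold P_C. field; auto.
Qed.


Lemma C1m4 z : Cmod z < 1 -> Cminus (RtoC 1) (Cpow z 4) <> RtoC 0.
Proof. intros Hz H. assert (Cpow z 4 = RtoC 1) by (replace (Cpow z 4) with (Cminus (RtoC 1) (Cminus (RtoC 1) (Cpow z 4))) by ring; rewrite H; ring).
    assert (Cmod (Cpow z 4) = 1) by (rewrite H0; apply Cmod_1).
    rewrite Cmod_pow in H1. pose proof (pow4_lt1 (Cmod z) (conj (Cmod_ge_0 z) Hz)). lra. Qed.

Lemma R1m4 z : Rabs z < 1 -> 1 - z^4 <> 0.
Proof. intros Hz. replace (z^4) with (Rabs z ^ 4).
  pose proof (pow4_lt1 (Rabs z) (conj (Rabs_pos z) Hz)). lra.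
  rewrite RPow_abs. apply Rabs_pos_eq. replace (z^4) with ((z^2)^2) by ring. apply pow2_ge_0. Qed.

Theorem lemma3p6 (b2 : R) (b3 : C)
  (hb2 : P_R b2 = 0) (hb2neg : b2 < 0)
  (hb3 : P_C b3 = RtoC 0) (hb3im : 0 < Im b3)
  (u : RC) (hu : inS b2 b3 u) :
  exists (eps eps' : nat -> bool) (L L' : RC),
    in_Dinf4 eps /\ in_Dinf4 eps' /\
    tail_sum b2 b3 eps L /\ tail_sum b2 b3 eps' L' /\
    L = RCadd u L'.
Proof.
  change (Concl b2 b3 u).
  pose proof (b2_bnd b2 hb2 hb2neg) as H2.
  pose proof (b3_bnd b3 hb3 hb3im) as H3.
  assert (z2 : b2 <> 0) by lra.
  assert (z3 : b3 <> RtoC 0) by (intros E; rewrite E in hb3im; simpl in hb3im; lra).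
  pose proof (R1m4 b2 H2) as n2. pose proof (C1m4 b3 H3) as n3.
  destruct hu as [[c0 [c1 [c2 [c3 [neg [Hn Hu]]]]]] | [Hu | [Hu | Hu]]]; cbv zeta in Hu.
  - destruct neg; subst u; [apply swap|];
    (destruct c0, c1, c2, c3;
     [ exfalso; apply Hn; auto
     | apply caseA_1110 | apply caseA_1101 | apply caseA_1100 | apply caseA_1011 | apply caseA_1010
     | apply caseA_1001 | apply caseA_1000 | apply caseA_0111 | apply caseA_0110 | apply caseA_0101
     | apply caseA_0100 | apply caseA_0011 | apply caseA_0010 | apply caseA_0001 | apply caseA_0000 ]; auto).
  - destruct Hu as [Hu|Hu]; subst u; [|apply swap]; apply caseB; auto.
  - destruct Hu as [Hu|Hu]; subst u; [|apply swap]; apply caseC; auto.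
  - destruct Hu as [Hu|Hu]; subst u; [|apply swap]; apply caseD; auto.
Qed.
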